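(* Let $A\in\mathbb{R}^{2\times2}$ be diagonalizable (over $\mathbb{C}$) and let $p\in\{1,\infty\}$. Then there exists an invertible $W\in\mathbb{R}^{2\times 2}$ such that the linear vector field $x\mapsto Ax$ is WIC with respect to the weighted norm $x\mapsto\|Wx\|_p$ (equivalently, $\mu_p(WAW^{-1})\le 0$) if and only if every eigenvalue of $A$ lies in the cone $\{\alpha+\beta i:\ \alpha\le 0,\ |\beta|\le-\alpha\}$.
   Context: For $x\in\mathbb{R}^2$, $\|x\|_1=|x_1|+|x_2|$ and $\|x\|_\infty=\max(|x_1|,|x_2|)$. The matrix measure of $B\in\mathbb{R}^{2\times2}$ is $\mu_p(B)=\lim_{h\to0^+}\frac{\|I+hB\|_p-1}{h}$ (induced matrix norm); explicitly $\mu_1(B)=\max_j\big(b_{jj}+\sum_{i\ne j}|b_{ij}|\big)$ and $\mu_\infty(B)=\max_i\big(b_{ii}+\sum_{j\ne i}|b_{ij}|\big)$. A vector field $f$ is weakly infinitesimally contracting (WIC) with respect to a norm if $\sup_x \mu(Df(x))\le 0$ for the matrix measure $\mu$ associated to that norm; for the weighted norm $\|Wx\|_p$ and $f(x)=Ax$ this means $\mu_p(WAW^{-1})\le 0$. *)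

(* Defs.v *)
From HB Require Import structures.
From mathcomp Require Import all_boot all_order all_algebra.
From mathcomp Require Import complex.
Set Implicit Arguments. Unset Strict Implicit. Unset Printing Implicit Defensive.
Import Order.TTheory GRing.Theory Num.Theory.
Local Open Scope ring_scope.

Inductive pIndex := P1 | PInf.

(* Matrix measure mu_1 of a 2x2 matrix (max column sum, diagonal entry signed). *)
Definition mu1 (R : realDomainType) (B : 'M[R]_2) : R :=
  Num.max (B 0 0 + `|B 1 0|) (B 1 1 + `|B 0 1|).

(* Matrix measure mu_infinity of a 2x2 matrix (max row sum, diagonal entry signed). *)
Definition muInf (R : realDomainType) (B : 'M[R]_2) : R :=
  Num.max (B 0 0 + `|B 0 1|) (B 1 1 + `|B 1 0|).

Definition mu (R : realDomainType) (p : pIndex) (B : 'M[R]_2) : R :=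
  match p with P1 => mu1 B | PInf => muInf B end.

Definition WIC_weighted (R : realFieldType) (p : pIndex) (W A : 'M[R]_2) : Prop :=
  mu p (W *m A *m invmx W) <= 0.

Definition in_cone (R : realFieldType) (z : R[i]) : Prop :=
  complex.Re z <= 0 /\ `|complex.Im z| <= - complex.Re z.

Definition complexify (R : realFieldType) (A : 'M[R]_2) : 'M[R[i]]_2 :=
  map_mx (real_complex R) A.

(* Main.v *)
Require Import Defs.
From HB Require Import structures.
From mathcomp Require Import all_boot all_order all_algebra.
From mathcomp Require Import complex.
From mathcomp Require Import ring lra.
Import Order.TTheory GRing.Theory Num.Theory.
Local Open Scope ring_scope.



Lemma mx2_eq (F : Type) (M N : 'M[F]_2) :
  M 0 0 = N 0 0 -> M 0 1 = N 0 1 -> M 1 0 = N 1 0 -> M 1 1 = N 1 1 -> M = N.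
Proof.
move=> h00 h01 h10 h11; apply/matrixP => i j.
have Hi : i = 0 \/ i = 1.
  case: i => [[|[|k]] Hk]; [left|right|by []]; exact/val_inj.
have Hj : j = 0 \/ j = 1.
  case: j => [[|[|k]] Hk]; [left|right|by []]; exact/val_inj.
by case: Hi => ->; case: Hj => ->.
Qed.

Lemma lift01 : lift (ord0 : 'I_2) (ord0 : 'I_1) = 1.
Proof. exact/val_inj. Qed.
Lemma lift10 : lift (1 : 'I_2) (ord0 : 'I_1) = 0.
Proof. exact/val_inj. Qed.
Lemma ord0E : (ord0 : 'I_2) = 0.
Proof. exact/val_inj. Qed.

Lemma mul2E (F : pzRingType) (M N : 'M[F]_2) i j :
  (M *m N) i j = M i 0 * N 0 j + M i 1 * N 1 j.
Proof. by rewrite mxE !big_ord_recl big_ord0 addr0 lift01. Qed.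

Lemma det2 (F : comPzRingType) (M : 'M[F]_2) :
  \det M = M 0 0 * M 1 1 - M 0 1 * M 1 0.
Proof.
rewrite (expand_det_row _ 0) !big_ord_recl big_ord0 addr0 /cofactor !det_mx11 !mxE /=.
rewrite !expr0 !expr1 /= -?ord0E !lift01 lift10. ring.
Qed.

Lemma tr2 (F : pzRingType) (M : 'M[F]_2) : \tr M = M 0 0 + M 1 1.
Proof. by rewrite /mxtrace !big_ord_recl big_ord0 addr0 lift01. Qed.


Section Cx2.

Local Open Scope complex_scope.

Lemma conj_tr (F : fieldType) (W A : 'M[F]_2) : W \in unitmx ->
  \tr (W *m A *m invmx W) = \tr A.
Proof. by move=> Wu; rewrite mxtrace_mulC mulmxA mulVmx // mul1mx. Qed.

Lemma conj_det (F : fieldType) (W A : 'M[F]_2) : W \in unitmx ->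
  \det (W *m A *m invmx W) = \det A.
Proof.
move=> Wu; rewrite !det_mulmx det_inv mulrC mulrA mulVr ?mul1r //.

Qed.

Lemma eig2 (R : rcfType) (A : 'M[R]_2) (z : R[i]) :
  eigenvalue (complexify A) z <->
  z * z - (A 0 0 + A 1 1)%:C * z + (A 0 0 * A 1 1 - A 0 1 * A 1 0)%:C = 0.
Proof.
have -> : eigenvalue (complexify A) z = (\det (z%:M - complexify A) == 0).
  apply/eigenvalueP/det0P=> [[v Av_av v_nz] | [v v_nz Av_av]]; exists v => //.
    by rewrite mulmxBr Av_av mul_mx_scalar subrr.
  by apply/eqP; rewrite -mul_mx_scalar eq_sym -subr_eq0 -mulmxBr Av_av.
rewrite det2 !mxE /= !rmorphB !rmorphM /= !rmorphD /=.
have E : (z - (A 0 0)%:C) * (z - (A 1 1)%:C) - (0 - (A 0 1)%:C) * (0 - (A 1 0)%:C) =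
   z * z - ((A 0 0)%:C + (A 1 1)%:C) * z + ((A 0 0)%:C * (A 1 1)%:C - (A 0 1)%:C * (A 1 0)%:C).
  ring.
rewrite mulr1n mulr0n E; split; [by move/eqP|by move=> ->].
Qed.

End Cx2.


Section Cx3.

Local Open Scope complex_scope.

Lemma quadC (R : rcfType) (t D x y : R) :
  (x +i* y) * (x +i* y) - t%:C * (x +i* y) + D%:C = 0 <->
  (x * x - y * y - t * x + D = 0 /\ x * y + y * x - t * y = 0).
Proof.
have -> : (x +i* y) * (x +i* y) - t%:C * (x +i* y) + D%:C =
   (x * x - y * y - t * x + D) +i* (x * y + y * x - t * y).
  rewrite -[LHS]/(Complex _ _). congr Complex; ring.
split=> [H|[-> ->] //]; have := congr1 (@complex.Re R) H; have := congr1 (@complex.Im R) H. move=> /= h1 h2; by split.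
Qed.

End Cx3.



Lemma good_core (R : rcfType) (a b c d : R) :
  a + `|c| <= 0 -> d + `|b| <= 0 ->
  a + d <= 0 /\ 0 <= a * d - b * c /\ 2 * (a * d - b * c) <= (a + d) * (a + d).
Proof.
move=> h1 h2.
have hb := normr_ge0 b; have hc := normr_ge0 c.
have hbc : `|b * c| = `|b| * `|c| by rewrite normrM.
have h3 := ler_norm (b * c); have h4 := ler_normr (b * c) (b*c).
have h5 : - (b * c) <= `|b * c| by rewrite -normrN ler_norm.
have ha : `|c| <= - a by lra.
have hd : `|b| <= - d by lra.
have h6 : `|b| * `|c| <= (- d) * (- a) by apply: ler_pM.
rewrite mulrNN mulrC in h6.
have sq : 0 <= (a - d) * (a - d) by rewrite -expr2 sqr_ge0.
split; first by lra.
split; first by lra.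
nra.
Qed.

Lemma good_of_mu (R : rcfType) p (B : 'M[R]_2) : mu p B <= 0 ->
  B 0 0 + B 1 1 <= 0 /\ 0 <= B 0 0 * B 1 1 - B 0 1 * B 1 0 /\
  2 * (B 0 0 * B 1 1 - B 0 1 * B 1 0) <= (B 0 0 + B 1 1) * (B 0 0 + B 1 1).
Proof.
case: p => /=; rewrite /mu1 /muInf ge_max => /andP[h1 h2].
  exact: good_core.
have [? [? ?]] := @good_core _ _ _ _ _ h1 h2; rewrite (mulrC (B 0 1)); by split.
Qed.

Lemma cone_good (R : rcfType) (t D x y : R) : t <= 0 -> 0 <= D -> 2 * D <= t * t ->
  x * x - y * y - t * x + D = 0 -> x * y + y * x - t * y = 0 ->
  in_cone (x +i* y)%C.
Proof.
move=> ht hD htD h2 h1; rewrite /in_cone /=.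
have : y * (2 * x - t) = 0 by rewrite -h1; ring.
move/eqP; rewrite mulf_eq0 => /orP[/eqP y0|/eqP xt].
  subst y; rewrite normr0; split; nra.
have xt' : t = 2 * x by lra.
subst t.
have hx : x <= 0 by lra.
split => //.
have hy : y * y <= x * x by nra.
case: (lerP 0 y) => hy0.
  rewrite ger0_norm //; nra.
rewrite ltr0_norm //; nra.
Qed.



Definition mk2 (F : Type) (x y z w : F) : 'M[F]_2 :=
  \matrix_(i < 2, j < 2) if i == 0 :> nat then (if j == 0 :> nat then x else y)
                        else (if j == 0 :> nat then z else w).

Arguments mk2 {F}.

Lemma mk2E (F : Type) (x y z w : F) :
  [/\ mk2 x y z w 0 0 = x, mk2 x y z w 0 1 = y, mk2 x y z w 1 0 = z & mk2 x y z w 1 1 = w].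
Proof. by rewrite !mxE. Qed.

Lemma mu_mk2 (R : rcfType) p (x y z w : R) :
  x + `|z| <= 0 -> w + `|y| <= 0 -> x + `|y| <= 0 -> w + `|z| <= 0 ->
  mu p (mk2 x y z w) <= 0.
Proof.
have [e1 e2 e3 e4] := mk2E _ x y z w.
by case: p => /= h1 h2 h3 h4; rewrite /mu1 /muInf e1 e2 e3 e4 ge_max ?h1 ?h2 ?h3 ?h4.
Qed.

Lemma conj_to (F : fieldType) (A P J : 'M[F]_2) : P \in unitmx ->
  A *m P = P *m J -> invmx P *m A *m invmx (invmx P) = J.
Proof. by move=> Pu h; rewrite invmxK -mulmxA h mulmxA mulVmx // mul1mx. Qed.

Lemma unit_mk2 (F : fieldType) (x y z w : F) : x * w - y * z != 0 ->
  mk2 x y z w \in unitmx.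
Proof.
have [e1 e2 e3 e4] := mk2E _ x y z w.
by move=> h; rewrite unitmxE det2 e1 e2 e3 e4 unitfE.
Qed.

Lemma via_P (R : rcfType) p (A : 'M[R]_2) (x y z w : R) (J : 'M[R]_2) :
  x * w - y * z != 0 -> A *m mk2 x y z w = mk2 x y z w *m J -> mu p J <= 0 ->
  exists W : 'M[R]_2, W \in unitmx /\ WIC_weighted p W A.
Proof.
move=> hdet hAP hJ; exists (invmx (mk2 x y z w)); split.
  by rewrite unitmx_inv; apply: unit_mk2.
by rewrite /WIC_weighted (@conj_to _ _ _ _ (@unit_mk2 _ _ _ _ _ hdet) hAP).
Qed.



Lemma eq_by (R : rcfType) (x y e : R) : x - y = - e -> e = 0 -> x = y.
Proof. by move=> h he; apply/subr0_eq; rewrite h he oppr0. Qed.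

Lemma backward (R : rcfType) (A : 'M[R]_2) p :
  diagonalizable (complexify A) ->
  (forall z : R[i], eigenvalue (complexify A) z -> in_cone z) ->
  exists W : 'M[R]_2, W \in unitmx /\ WIC_weighted p W A.
Proof.
move=> hdiag hcone.
have root : forall x y : R,
    x * x - y * y - (A 0 0 + A 1 1) * x + (A 0 0 * A 1 1 - A 0 1 * A 1 0) = 0 ->
    x * y + y * x - (A 0 0 + A 1 1) * y = 0 -> in_cone (x +i* y)%C.
  move=> x y h1 h2; apply: hcone; apply/eig2/quadC; by split.
have rootR : forall l : R,
    l * l - (A 0 0 + A 1 1) * l + (A 0 0 * A 1 1 - A 0 1 * A 1 0) = 0 -> l <= 0.
  move=> l hl; have [] := root l 0 _ _; [by rewrite mulr0 subr0|by ring|by []].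
have hAP : forall P J : 'M[R]_2, (forall i j, (A *m P) i j = (P *m J) i j) -> A *m P = P *m J.
  by move=> P J h; apply/matrixP => i j; apply: h.
move: root rootR hAP hdiag.
set a : R := A 0 0; set b : R := A 0 1; set c : R := A 1 0; set d : R := A 1 1.
move=> root rootR hAP hdiag.
have Aeq : A = mk2 a b c d.
  by have [e1 e2 e3 e4] := mk2E _ a b c d; apply: mx2_eq; rewrite ?e1 ?e2 ?e3 ?e4.
clearbody a b c d.
case: (boolP ((b == 0) && (c == 0))) => [/andP[/eqP b0 /eqP c0]|hbc].
  exists 1%:M; split; first exact: unitmx1.
  rewrite /WIC_weighted invmx1 mul1mx mulmx1 Aeq b0 c0.
  have ha : a <= 0 by apply: rootR; rewrite b0 c0; ring.
  have hd : d <= 0 by apply: rootR; rewrite b0 c0; ring.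
  by apply: mu_mk2; rewrite normr0 addr0.
have mulE : forall x y z w : R, forall J : 'M[R]_2,
   a * x + b * z = x * J 0 0 + y * J 1 0 -> a * y + b * w = x * J 0 1 + y * J 1 1 ->
   c * x + d * z = z * J 0 0 + w * J 1 0 -> c * y + d * w = z * J 0 1 + w * J 1 1 ->
   A *m mk2 x y z w = mk2 x y z w *m J.
  move=> x y z w J h1 h2 h3 h4; have [e1 e2 e3 e4] := mk2E _ x y z w.
  have [f1 f2 f3 f4] := mk2E _ a b c d.
  by apply: mx2_eq; rewrite !mul2E ?e1 ?e2 ?e3 ?e4 Aeq ?f1 ?f2 ?f3 ?f4.
have sqrE : forall r : R, 0 <= r -> Num.sqrt r * Num.sqrt r = r.
  by move=> r hr; rewrite -expr2 sqr_sqrtr.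
have sq0 : 0 <= (a - d) * (a - d) by rewrite -expr2 sqr_ge0.
case: (ltgtP ((a - d) * (a - d) + 4 * (b * c)) 0) => hDl.
- have hs := sqrE (- ((a - d) * (a - d) + 4 * (b * c))) ltac:(lra).
  have hs0 : 0 < Num.sqrt (- ((a - d) * (a - d) + 4 * (b * c))) by rewrite sqrtr_gt0; lra.
  move: hs hs0; set s := Num.sqrt _ => hs hs0.
  have hal2 : (a + d) / 2 * 2 = a + d by rewrite mulfVK // pnatr_eq0.
  have hbe2 : s / 2 * 2 = s by rewrite mulfVK // pnatr_eq0.
  move: hal2 hbe2; set al := (a + d) / 2; set be := s / 2 => hal2 hbe2.
  have hr : al * al - be * be - (a + d) * al + (a * d - b * c) = 0 by nra.
  have hr2 : al * be + be * al - (a + d) * be = 0.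
    by rewrite -hal2; ring.
  have [hal hbe] : in_cone (al +i* be)%C by apply: root.
  rewrite /= in hal hbe.
  have hbe0 : 0 < be by lra.
  have hb : b != 0.
    apply/eqP => b0; move: hDl; rewrite b0 mul0r mulr0 addr0; lra.
  apply: (@via_P R p A b 0 (al - a) be (mk2 al be (- be) al)).
  + by rewrite mul0r subr0 mulf_neq0 // gt_eqF.
  + have [e1 e2 e3 e4] := mk2E _ al be (- be) al.
    apply: mulE; rewrite ?e1 ?e2 ?e3 ?e4.
    * ring.
    * ring.
    * apply/subr0_eq; apply: (etrans _ (_ : - (al * al - be * be - (a + d) * al + (a * d - b * c)) = 0)).
        ring.
      by rewrite hr oppr0.
    * apply/subr0_eq; apply: (etrans _ (_ : - (al * be + be * al - (a + d) * be) = 0)).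
        ring.
      by rewrite hr2 oppr0.
  + rewrite (gtr0_norm hbe0) in hbe.
    by apply: mu_mk2; rewrite ?normrN (gtr0_norm hbe0); lra.
- have hs := sqrE ((a - d) * (a - d) + 4 * (b * c)) (ltW hDl).
  have hs0 : 0 < Num.sqrt ((a - d) * (a - d) + 4 * (b * c)) by rewrite sqrtr_gt0.
  move: hs hs0; set s := Num.sqrt _ => hs hs0.
  have hl1 : (a + d + s) / 2 * 2 = a + d + s by rewrite mulfVK // pnatr_eq0.
  have hl2 : (a + d - s) / 2 * 2 = a + d - s by rewrite mulfVK // pnatr_eq0.
  move: hl1 hl2; set l1 := (a + d + s) / 2; set l2 := (a + d - s) / 2 => hl1 hl2.
  clearbody l1 l2 s.
  have r1 : l1 * l1 - (a + d) * l1 + (a * d - b * c) = 0.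
    have h : (l1 * 2) * (l1 * 2) - 2 * (a + d) * (l1 * 2) + 4 * (a * d - b * c) = 0.
      rewrite hl1; apply: (etrans _ (_ : s * s - ((a - d) * (a - d) + 4 * (b * c)) = 0)).
        ring.
      by rewrite hs subrr.
    have : 4 * (l1 * l1 - (a + d) * l1 + (a * d - b * c)) = 0 by rewrite -h; ring.
    by move/eqP; rewrite mulf_eq0 pnatr_eq0 /= => /eqP.
  have r2 : l2 * l2 - (a + d) * l2 + (a * d - b * c) = 0.
    have h : (l2 * 2) * (l2 * 2) - 2 * (a + d) * (l2 * 2) + 4 * (a * d - b * c) = 0.
      rewrite hl2; apply: (etrans _ (_ : s * s - ((a - d) * (a - d) + 4 * (b * c)) = 0)).
        ring.
      by rewrite hs subrr.
    have : 4 * (l2 * l2 - (a + d) * l2 + (a * d - b * c)) = 0 by rewrite -h; ring.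
    by move/eqP; rewrite mulf_eq0 pnatr_eq0 /= => /eqP.
  have n1 := rootR _ r1; have n2 := rootR _ r2.
  have l12 : l1 - l2 = s by lra.
  have hJ : mu p (mk2 l1 0 0 l2) <= 0 by apply: mu_mk2; rewrite normr0 addr0.
  have [e1 e2 e3 e4] := mk2E _ l1 0 0 l2.
  case: (eqVneq b 0) => [b0|hb].
  + have hc : c != 0 by move: hbc; rewrite b0 eqxx /=.
    rewrite b0 in r1 r2.
    apply: (@via_P R p A (l1 - d) (l2 - d) c c (mk2 l1 0 0 l2)) => //.
      rewrite -mulrBl (_ : l1 - d - (l2 - d) = s); last by lra.
      by rewrite mulf_neq0 // gt_eqF.
    apply: mulE; rewrite ?e1 ?e2 ?e3 ?e4 ?b0.
    * by apply: (@eq_by _ _ _ _ ^~ r1); ring.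
    * by apply: (@eq_by _ _ _ _ ^~ r2); ring.
    * ring.
    * ring.
  + apply: (@via_P R p A b b (l1 - a) (l2 - a) (mk2 l1 0 0 l2)) => //.
      rewrite -mulrBr (_ : l2 - a - (l1 - a) = - s); last by lra.
      by rewrite mulf_neq0 // oppr_eq0 gt_eqF.
    apply: mulE; rewrite ?e1 ?e2 ?e3 ?e4.
    * ring.
    * ring.
    * by apply: (@eq_by _ _ _ _ ^~ r1); ring.
    * by apply: (@eq_by _ _ _ _ ^~ r2); ring.
- exfalso.
  case: hdiag => Q Qu /(diagonalizable_forP _ Qu) hQ.
  have hT := @conj_tr _ Q (complexify A) Qu.
  have hD := @conj_det _ Q (complexify A) Qu.
  move: hQ hT hD; set M := Q *m complexify A *m invmx Q => hQ hT hD.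
  have A'eq : complexify A = invmx Q *m M *m Q.
    by rewrite /M !mulmxA mulVmx // mul1mx -mulmxA mulVmx // mulmx1.
  have m01 : M 0 1 = 0 by apply: hQ.
  have m10 : M 1 0 = 0 by apply: hQ.
  have cE : forall i j, complexify A i j = (A i j)%:C%C by move=> i j; rewrite mxE.
  have [f1 f2 f3 f4] := mk2E _ a b c d.
  rewrite !tr2 !det2 !cE Aeq f1 f2 f3 f4 m01 m10 in hT hD.
  clearbody M.
  have hsq : (M 0 0 - M 1 1) * (M 0 0 - M 1 1) = 0.
    transitivity ((M 0 0 + M 1 1) * (M 0 0 + M 1 1) - 4 * (M 0 0 * M 1 1 - 0 * 0)); first ring.
    rewrite hT hD.
    transitivity (((a - d) * (a - d) + 4 * (b * c))%:C%C); last by rewrite hDl.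
    rewrite ?rmorphD ?rmorphM ?rmorph_nat.
    rewrite -[LHS]/(Complex _ _) -[RHS]/(Complex _ _).
    by congr Complex; ring.
  have m0 : M 0 0 = M 1 1 by apply/eqP; rewrite -subr_eq0; move/eqP: hsq; rewrite mulf_eq0 orbb.
  have Meq : M = (M 0 0)%:M.
    by apply: mx2_eq; rewrite !mxE /= ?m01 ?m10 ?m0 ?mulr1n ?mulr0n.
  rewrite Meq mul_mx_scalar -scalemxAl mulVmx // scalemx1 in A'eq.
  have hb : (A 0 1)%:C%C = 0.
    by rewrite -cE A'eq mxE.
  have hc : (A 1 0)%:C%C = 0.
    by rewrite -cE A'eq mxE.
  rewrite Aeq f2 f3 in hb hc.
  move: hbc; case: hb => ->; case: hc => ->; by rewrite eqxx.
Qed.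
Theorem mainTheorem3 (R : rcfType) (A : 'M[R]_2) (p : pIndex) :
  diagonalizable (complexify A) ->
  ((exists W : 'M[R]_2, W \in unitmx /\ WIC_weighted p W A) <->
   (forall z : R[i], eigenvalue (complexify A) z -> in_cone z)).
Proof.
move=> hdiag; split; last by move=> h; exact: backward.
case=> W [Wu hW] z /eig2 hz.
have [ht [hD htD]] := @good_of_mu R p (W *m A *m invmx W) hW.
have eT := @conj_tr _ W A Wu; have eD := @conj_det _ W A Wu.
rewrite tr2 tr2 in eT; rewrite det2 det2 in eD.
rewrite eT in ht htD; rewrite eD in hD htD.
move: hz; case: z => x y /quadC [h1 h2].
exact: (@cone_good R _ _ x y ht hD htD h1 h2).
Qed.
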